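(* Let $C$ be a non-empty strictly convex cone in a topological real vector space $V$ and $f:C\to\mathbb{R}$ a non-negative positively homogeneous function ($f(\lambda x)=\lambda f(x)$ for $x\in C$, $\lambda>0$). Then for any real number $\alpha>1$ the following are equivalent: (1) $f$ is continuous and $f^{\alpha}$ is strictly convex. (2) $f$ is continuous and strictly quasi-convex. (3) $f$ is strictly sub-convex and $f^{-1}(0)\subseteq\{0\}$.
   Context: Topological real vector spaces are not assumed Hausdorff; $C$ carries the subspace topology. A cone is a subset $C$ with $\lambda C\subseteq C$ for all real $\lambda>0$ (it may or may not contain $0$). A function $g$ on a convex set $C$ is strictly convex if $g((1-t)x+ty)<(1-t)g(x)+tg(y)$ for all distinct $x,y\in C$, $t\in(0,1)$; strictly quasi-convex if $g((1-t)x+ty)<\max\{g(x),g(y)\}$ for such $x,y,t$. For $f:C\to\mathbb{R}$, $S_r(f)=\{x\in C: f(x)\le r\}$. For a subset $S$, $\mathrm{Aff}(S)$ is its affine hull; $\mathrm{ri}(S)$, $\mathrm{rc}(S)$ are the interior and closure of $S$ in the subspace topology of $\mathrm{Aff}(S)$. $]x,y[=\{(1-t)x+ty: t\in[0,1]\}\setminus\{x,y\}$. A subset $C$ is strictly convex if for any two distinct $x,y\in\mathrm{rc}(C)$, $]x,y[\subseteq\mathrm{ri}(C)$. $f$ is strictly sub-convex if $S_r(f)$ is strictly convex for every $r\in\mathbb{R}$. *)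

(* Defs.v *)
From HB Require Import structures.
From mathcomp Require Import all_boot all_order all_algebra.
From mathcomp Require Import all_classical all_reals all_analysis.
Set Implicit Arguments. Unset Strict Implicit. Unset Printing Implicit Defensive.
Import Order.TTheory GRing.Theory Num.Theory.
Import numFieldNormedType.Exports.
Local Open Scope classical_set_scope.
Local Open Scope ring_scope.

Section Defs.
Variables (R : realType) (V : topologicalLmodType R).

Definition is_cone (C : set V) : Prop :=
  forall (l : R) (x : V), 0 < l -> C x -> C (l *: x).

Definition Aff (S : set V) : set V :=
  [set x | exists (n : nat) (t : 'I_n -> R) (p : 'I_n -> V),
     (forall i, S (p i)) /\ \sum_(i < n) t i = 1 /\ x = \sum_(i < n) t i *: p i].

(* relative interior: interior of S in the subspace topology of Aff S *)
Definition ri (S : set V) : set V :=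
  [set x | Aff S x /\ exists U : set V, open U /\ U x /\ (U `&` Aff S `<=` S)].

(* relative closure: closure of S in the subspace topology of Aff S *)
Definition rc (S : set V) : set V :=
  [set x | Aff S x /\ forall U : set V, open U -> U x ->
     exists y, U y /\ Aff S y /\ S y].

Definition open_segment (x y : V) : set V :=
  [set z | (exists t : R, 0 <= t <= 1 /\ z = (1 - t) *: x + t *: y)
           /\ z <> x /\ z <> y].

Definition strictly_convex_set (C : set V) : Prop :=
  forall x y, rc C x -> rc C y -> x <> y -> open_segment x y `<=` ri C.

Definition strictly_convex_fun (C : set V) (g : V -> R) : Prop :=
  forall x y (t : R), C x -> C y -> x <> y -> 0 < t < 1 ->
    g ((1 - t) *: x + t *: y) < (1 - t) * g x + t * g y.

Definition strictly_quasi_convex_fun (C : set V) (g : V -> R) : Prop :=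
  forall x y (t : R), C x -> C y -> x <> y -> 0 < t < 1 ->
    g ((1 - t) *: x + t *: y) < Num.max (g x) (g y).

Definition sublevel (C : set V) (f : V -> R) (r : R) : set V :=
  [set x | C x /\ f x <= r].

Definition strictly_sub_convex (C : set V) (f : V -> R) : Prop :=
  forall r : R, strictly_convex_set (sublevel C f r).

End Defs.

(* Main.v *)
Require Import Defs.
From HB Require Import structures.
From mathcomp Require Import all_boot all_order all_algebra.
From mathcomp Require Import all_classical all_reals all_analysis.
From mathcomp Require Import ring lra.
Import Order.TTheory GRing.Theory Num.Theory.
Import numFieldNormedType.Exports.
Local Open Scope classical_set_scope.
Local Open Scope ring_scope.
Set Implicit Arguments. Unset Strict Implicit. Unset Printing Implicit Defensive.
Section Top.
Variables (R : realType) (V : topologicalLmodType R).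

Lemma scal_cont_r (u : V) : continuous (fun s : R => s *: u).
Proof.
move=> s.
apply: (@continuous_comp R (R^o * V)%type V (fun s => (s, u)) (fun z => z.1 *: z.2)).
  exact: (cvg_pair cvg_id (cvg_cst u)).
exact: scale_continuous.
Qed.

Lemma line_cont (u v : V) : continuous (fun s : R => v + s *: u).
Proof.
move=> s.
apply: (@continuous_comp R (V * V)%type V (fun s => (v, s *: u)) (fun z => z.1 + z.2)).
  have h := @scal_cont_r u s.
  exact: (cvg_pair (cvg_cst v) h).
exact: add_continuous.
Qed.

Lemma aff_cont (a : R) (b : V) : continuous (fun w : V => a *: w + b).
Proof.
move=> w.
apply: (@continuous_comp V (V * V)%type V (fun w => (a *: w, b)) (fun z => z.1 + z.2)).
  apply: (cvg_pair _ (cvg_cst b)).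
  apply: (@continuous_comp V (R^o * V)%type V (fun w => (a, w)) (fun z => z.1 *: z.2)).
    exact: (cvg_pair (cvg_cst a) cvg_id).
  exact: scale_continuous.
exact: add_continuous.
Qed.

Lemma aff_open (a : R) (b : V) (U : set V) : open U -> open ((fun w => a *: w + b) @^-1` U).
Proof. by move=> oU; apply: (proj1 (continuousP _) (@aff_cont a b)). Qed.

Lemma line_near (u v : V) (s0 : R) (U : set V) : open U -> U (v + s0 *: u) ->
  exists2 e : R, 0 < e & forall s, `|s - s0| < e -> U (v + s *: u).
Proof.
move=> oU Us0.
have : nbhs s0 ((fun s : R => v + s *: u) @^-1` U).
  apply: line_cont. by apply: open_nbhs_nbhs; split.
move=> /nbhs_ballP [e e0 He]; exists e => // s hs; apply: He.
by rewrite /ball /= distrC.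
Qed.

End Top.
Section Aff.
Variables (R : realType) (V : topologicalLmodType R).

Lemma aff3 (S : set V) a b c (x y z : R) : S a -> S b -> S c -> x + y + z = 1 ->
  Aff S (x *: a + y *: b + z *: c).
Proof.
move=> Sa Sb Sc h.
exists 3%N, (fun i : 'I_3 => nth 0 [:: x; y; z] i), (fun i : 'I_3 => nth 0 [:: a; b; c] i).
split; first by move=> [[|[|[|k]]] hk] //=.
by split; rewrite !big_ord_recr big_ord0 /= !add0r.
Qed.

Lemma aff2 (S : set V) a b (x y : R) : S a -> S b -> x + y = 1 ->
  Aff S (x *: a + y *: b).
Proof.
move=> Sa Sb h; have := @aff3 S a b a x y 0 Sa Sb Sa.
by rewrite addr0 scale0r addr0; apply.
Qed.

Lemma aff_self (S : set V) a : S a -> Aff S a.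
Proof. by move=> Sa; have := @aff2 S a a 1 0 Sa Sa; rewrite scale1r scale0r addr0 addr0; apply. Qed.

Lemma aff_mono (S T : set V) : S `<=` T -> Aff S `<=` Aff T.
Proof. by move=> ST x [n [t [p [Hp [H1 H2]]]]]; exists n, t, p; split=> // i; apply: ST. Qed.

Lemma rc_mono (S T : set V) : S `<=` T -> rc S `<=` rc T.
Proof.
move=> ST x [Ax Hx]; split; first exact: aff_mono Ax.
move=> U oU Ux; have [y [Uy [Ay Sy]]] := Hx U oU Ux.
by exists y; split=> //; split; [exact: aff_mono Ay| exact: ST].
Qed.

Lemma sub_rc (S : set V) : S `<=` rc S.
Proof. move=> x Sx; split; first exact: aff_self. by move=> U _ Ux; exists x; split=> //; split=> //; apply: aff_self. Qed.

Lemma ri_sub (S : set V) : ri S `<=` S.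
Proof. by move=> x [Ax [U [_ [Ux H]]]]; apply: H. Qed.

Lemma rc_aff (S : set V) : rc S `<=` Aff S.
Proof. by move=> x []. Qed.

Lemma seg_neq_l (a b : V) (t : R) : a <> b -> 0 < t -> (1 - t) *: a + t *: b <> a.
Proof.
move=> ab t0 h; apply: ab.
have : t *: (b - a) = 0.
  rewrite -(subrr a) -{2}h scalerBr scalerBl scale1r.
  by rewrite addrAC [a - _ - _]addrAC subrr add0r addrC.
move/eqP; rewrite scaler_eq0 (gt_eqF t0) /= subr_eq0 => /eqP; done.
Qed.

End Aff.
Section Seg.
Variables (R : realType) (V : topologicalLmodType R).

Lemma seg_neq_r (a b : V) (t : R) : a <> b -> t < 1 -> (1 - t) *: a + t *: b <> b.
Proof.
move=> ab t1; have := @seg_neq_l _ _ b a (1 - t) (nesym ab).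
rewrite subr_gt0 => /(_ t1).
have -> : 1 - (1 - t) = t by lra.
by rewrite addrC.
Qed.

Lemma open_seg (a b : V) (t : R) : a <> b -> 0 < t < 1 ->
  open_segment a b ((1 - t) *: a + t *: b).
Proof.
move=> ab /andP[t0 t1]; split; first by exists t; split=> //; rewrite (ltW t0) (ltW t1).
by split; [exact: seg_neq_l | exact: seg_neq_r].
Qed.

Lemma comb_same (a : V) (t : R) : (1 - t) *: a + t *: a = a.
Proof. by rewrite -scalerDl subrK scale1r. Qed.

Lemma comb_scal (a : V) (x y : R) : x *: a + y *: a = (x + y) *: a.
Proof. by rewrite scalerDl. Qed.

End Seg.

Section Cone.
Variables (R : realType) (V : topologicalLmodType R) (C : set V).
Hypothesis hcone : is_cone C.
Hypothesis hsc : strictly_convex_set C.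

Lemma convC a b (t : R) : C a -> C b -> 0 <= t <= 1 -> C ((1 - t) *: a + t *: b).
Proof.
move=> Ca Cb /andP[t0 t1].
have [->|ab] := eqVneq a b; first by rewrite comb_same.
have [->|tn0] := eqVneq t 0; first by rewrite subr0 scale1r scale0r addr0.
have [->|tn1] := eqVneq t 1; first by rewrite subrr scale0r add0r scale1r.
have ab' : a <> b by apply/eqP.
apply: ri_sub; apply: (hsc (sub_rc Ca) (sub_rc Cb) ab').
apply: open_seg => //.
by rewrite lt_neqAle eq_sym tn0 t0 lt_neqAle tn1 t1.
Qed.

Lemma aff_scale (l : R) x : 0 < l -> Aff C x -> Aff C (l *: x).
Proof.
move=> l0 [n [t [p [Hp [H1 H2]]]]]; exists n, t, (fun i => l *: p i); split.
  by move=> i; apply: hcone.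
split=> //; rewrite H2 scaler_sumr; apply: eq_bigr => i _.
by rewrite !scalerA mulrC.
Qed.

Lemma rc_cone x : rc C x -> x <> 0 -> C x.
Proof.
move=> [Ax Hx] x0.
have rc2 : rc C (2 *: x).
  split; first exact: aff_scale.
  move=> U oU U2x.
  have := Hx ((fun w => 2 *: w + 0) @^-1` U) (aff_open 2 0 oU).
  rewrite /preimage /= addr0 => /(_ U2x) [y [Uy [Ay Cy]]].
  exists (2 *: y); split; first by rewrite addr0 in Uy.
  by split; [exact: aff_scale | exact: hcone].
have x2 : x <> 2 *: x.
  move=> h; apply: x0; have : (2 - 1) *: x = 0 by rewrite scalerBl -h scale1r subrr.
  by move/eqP; rewrite scaler_eq0 => /orP[|/eqP//]; rewrite (_ : 2 - 1 = 1 :> R) ?oner_eq0 //; lra.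
have := hsc (conj Ax Hx) rc2 x2.
move=> /(_ ((1 - 2^-1) *: x + 2^-1 *: (2 *: x))).
have h12 : 0 < (2^-1 : R) < 1 by apply/andP; split; lra.
move=> /(_ (open_seg x2 h12)) /ri_sub Cz.
have -> : x = (2 / 3) *: ((1 - 2^-1) *: x + 2^-1 *: (2 *: x)).
  rewrite scalerA comb_scal scalerA.
  by rewrite (_ : 2 / 3 * (1 - 2^-1 + 2^-1 * 2) = 1 :> R) ?scale1r //; field.
by apply: hcone => //; lra.
Qed.

Lemma ri_C p : C p -> p <> 0 -> ri C p.
Proof.
move=> Cp p0.
have ne : 2^-1 *: p <> 2 *: p.
  move=> h; apply: p0; have : (2 - 2^-1) *: p = 0 by rewrite scalerBl h subrr.
  by move/eqP; rewrite scaler_eq0 => /orP[/eqP h2|/eqP//]; exfalso; move: h2; lra.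
have C1 : C (2^-1 *: p) by apply: hcone => //; lra.
have C2 : C (2 *: p) by apply: hcone => //; lra.
have h13 : 0 < (3^-1 : R) < 1 by apply/andP; split; lra.
have := hsc (sub_rc C1) (sub_rc C2) ne (open_seg ne h13).
rewrite !scalerA comb_scal.
by rewrite (_ : (1 - 3^-1) * 2^-1 + 3^-1 * 2 = 1 :> R) ?scale1r //; field.
Qed.

End Cone.
Section Cont.
Variables (R : realType) (V : topologicalLmodType R).

Lemma cont_get (C : set V) (f : V -> R) : {within C, continuous f} ->
  forall x, C x -> forall e : R, 0 < e ->
  exists U, [/\ open U, U x & forall y, U y -> C y -> `|f x - f y| < e].
Proof.
move=> /subspace_continuousP fc x Cx e e0.
have H := proj1 (cvgrPdist_lt _ _) (fc x Cx) e e0.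
have FF : Filter (within C (nbhs x)) by apply: within_filter.
move: (H FF); rewrite near_withinE /= nbhsE => -[B [oB Bx] HB].
by exists B; split => // y By Cy; apply: HB.
Qed.

Lemma cont_build (C : set V) (f : V -> R) :
  (forall x, C x -> forall e : R, 0 < e ->
  exists U, [/\ open U, U x & forall y, U y -> C y -> `|f x - f y| < e]) ->
  {within C, continuous f}.
Proof.
move=> H; apply/subspace_continuousP => x Cx.
apply/cvgrPdist_lt => e e0; rewrite near_withinE /= nbhsE.
have [U [oU Ux HU]] := H x Cx e e0.
exists U; first by split.
by move=> y Uy Cy; apply: HU.
Qed.

End Cont.
Section Pow.
Variables (R : realType) (alpha : R).
Hypothesis ha : 1 < alpha.

Lemma pw_lt (u v : R) : 0 <= u -> u < v -> u `^ alpha < v `^ alpha.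
Proof.
have ha' := ha.
have a0 : 0 < alpha by apply: lt_trans ha; exact: ltr01.
move=> u0 uv; apply: gt0_ltr_powR => //; rewrite ?nnegrE //; exact: le_trans u0 (ltW uv).
Qed.

Lemma pw_le (u v : R) : 0 <= u -> u <= v -> u `^ alpha <= v `^ alpha.
Proof.
have ha' := ha.
have a0 : 0 <= alpha by apply: ltW; apply: lt_trans ha; exact: ltr01.
move=> u0 uv; apply: ge0_ler_powR => //; rewrite ?nnegrE //; exact: le_trans u0 uv.
Qed.

Lemma bern (x : R) : 0 < x -> x != 1 -> 1 + alpha * (x - 1) < x `^ alpha.
Proof.
have ha' := ha.
move=> x0 x1.
set g := alpha - 1.
have g0 : 0 < g by rewrite /g; lra.
have xn0 : x != 0 by rewrite gt_eqF.
have -> : x `^ alpha = x * x `^ g.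
  rewrite -{2}(@powRr1 _ x) ?ltW // -powRD; last by rewrite xn0 implybT.
  by congr (_ `^ _); rewrite /g; lra.
have hg : x `^ g = expR (g * ln x) by rewrite /powR (negbTE xn0).
have lnx : ln x != 0 by rewrite ln_eq0.
have h1 : 1 + g * ln x < x `^ g.
  by rewrite hg; apply: expR_gt1Dx; rewrite mulf_neq0 // gt_eqF.
have h2 : 1 - x^-1 <= ln x.
  have := expR_ge1Dx (ln x^-1).
  rewrite lnK ?posrE ?invr_gt0 // lnV ?posrE //; lra.
have h3 : x * x^-1 = 1 by rewrite mulfV.
have h4 : 1 + g * (1 - x^-1) < x `^ g.
  apply: le_lt_trans h1; rewrite lerD2l; apply: ler_wpM2l; lra.
have : x * (1 + g * (1 - x^-1)) < x * x `^ g by rewrite ltr_pM2l.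
rewrite /g; nra.
Qed.

Lemma tangent (u v : R) : 0 < u -> 0 <= v -> v != u ->
  u `^ alpha + alpha * u `^ alpha * (v / u - 1) < v `^ alpha.
Proof.
have ha' := ha.
move=> u0 v0 vu.
have P0 : 0 < u `^ alpha by apply: powR_gt0.
have [->|vn0] := eqVneq v 0.
  rewrite mul0r powR0 ?gt_eqF //; last lra.
  nra.
have vp : 0 < v by rewrite lt_neqAle eq_sym vn0 v0.
have x0 : 0 < v / u by rewrite divr_gt0.
have x1 : v / u != 1.
  apply/eqP => h; move/eqP: vu; apply; apply/eqP.
  have un0 : u != 0 by rewrite gt_eqF.
  by rewrite -[v](mulfVK un0) h mul1r.
have := bern x0 x1.
have -> : v `^ alpha = (v / u) `^ alpha * u `^ alpha.
  by rewrite -powRM ?ltW // mulfVK // gt_eqF.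
nra.
Qed.

End Pow.
Section Main.
Variables (R : realType) (V : topologicalLmodType R) (C : set V) (f : V -> R).
Hypothesis hcone : is_cone C.
Hypothesis hsc : strictly_convex_set C.
Hypothesis hnn : forall x, C x -> 0 <= f x.
Hypothesis hhom : forall (l : R) x, 0 < l -> C x -> f (l *: x) = l * f x.

Lemma f0 : C 0 -> f 0 = 0.
Proof.
move=> C0; have h := hhom (l := 2) (x := 0) (ltr0Sn _ _) C0.
rewrite scaler0 in h; lra.
Qed.

Lemma two_neq (x : V) : x <> 0 -> x <> 2 *: x.
Proof.
move=> x0 h; apply: x0; have : (2 - 1) *: x = 0 by rewrite scalerBl -h scale1r subrr.
by move/eqP; rewrite scaler_eq0 => /orP[/eqP h2|/eqP//]; exfalso; move: h2; lra.
Qed.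

Lemma Q_pos x : strictly_quasi_convex_fun C f -> C x -> x <> 0 -> 0 < f x.
Proof.
move=> Q Cx x0.
have C2 : C (2 *: x) by apply: hcone => //; lra.
have h12 : 0 < (2^-1 : R) < 1 by apply/andP; split; lra.
have := Q x (2 *: x) (2^-1) Cx C2 (two_neq x0) h12.
have -> : (1 - 2^-1) *: x + 2^-1 *: (2 *: x) = (3/2) *: x.
  by rewrite scalerA comb_scal; congr (_ *: _); field.
rewrite !hhom //; try lra.
have := hnn Cx; rewrite le_eqVlt => /orP[/eqP h0|//].
by rewrite -h0 !mulr0 maxxx ltxx.
Qed.

Lemma Q_conv x y (t : R) : strictly_quasi_convex_fun C f -> C x -> C y -> 0 < t -> t < 1 ->
  f ((1 - t) *: x + t *: y) <= (1 - t) * f x + t * f y.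
Proof.
move=> Q Cx Cy t0 t1.
have [<-|xy] := eqVneq x y; first by rewrite comb_same -mulrDl subrK mul1r.
have [x0|x0] := eqVneq x 0.
  have C0 : C 0 by rewrite -x0.
  rewrite x0 scaler0 add0r hhom // (f0 C0); lra.
have [y0|y0] := eqVneq y 0.
  have C0 : C 0 by rewrite -y0.
  rewrite y0 scaler0 addr0 hhom ?(f0 C0) //; lra.
have x0' : x <> 0 by apply/eqP.
have y0' : y <> 0 by apply/eqP.
have ax := Q_pos Q Cx x0'.
have ay := Q_pos Q Cy y0'.
have m0 : 0 < (1 - t) * f x + t * f y by nra.
have s0 : 0 < t * f y / ((1 - t) * f x + t * f y) by apply: divr_gt0 => //; nra.
have s1 : t * f y / ((1 - t) * f x + t * f y) < 1.
  by rewrite ltr_pdivrMr // mul1r; nra.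
have Cu : C ((f x)^-1 *: x) by apply: hcone => //; rewrite invr_gt0.
have Cv : C ((f y)^-1 *: y) by apply: hcone => //; rewrite invr_gt0.
have fu : f ((f x)^-1 *: x) = 1 by rewrite hhom ?invr_gt0 // mulVf // gt_eqF.
have fv : f ((f y)^-1 *: y) = 1 by rewrite hhom ?invr_gt0 // mulVf // gt_eqF.
set s := t * f y / _ in s0 s1.
set w := (1 - s) *: ((f x)^-1 *: x) + s *: ((f y)^-1 *: y).
have Cw : C w by apply: convC => //; rewrite !ltW.
have fw : f w <= 1.
  have [e|ne] := eqVneq ((f x)^-1 *: x) ((f y)^-1 *: y).
    by rewrite /w -e comb_same fu.
  have ne' : (f x)^-1 *: x <> (f y)^-1 *: y by apply/eqP.
  have := Q _ _ s Cu Cv ne'; rewrite s0 s1 fu fv maxxx => /(_ isT) h.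
  by rewrite ltW.
have -> : (1 - t) *: x + t *: y = ((1 - t) * f x + t * f y) *: w.
  rewrite /w /s scalerDr !scalerA; congr (_ *: _ + _ *: _).
    field; rewrite ?gt_eqF //.
  field; rewrite ?gt_eqF //.
rewrite hhom //.
by rewrite -{2}[_ * f x + _]mulr1 ler_wpM2l // ltW.
Qed.

Lemma Q_spow (alpha : R) : 1 < alpha -> strictly_quasi_convex_fun C f ->
  strictly_convex_fun C (fun x => f x `^ alpha).
Proof.
move=> ha Q x y t Cx Cy xy /andP[t0 t1] /=.
have Cz : C ((1 - t) *: x + t *: y) by apply: convC => //; rewrite !ltW.
have hz := Q_conv Q Cx Cy t0 t1.
have fz0 := hnn Cz.
have ax := hnn Cx; have ay := hnn Cy.
have [e|ne] := eqVneq (f x) (f y).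
  have := Q x y t Cx Cy xy; rewrite t0 t1 e maxxx => /(_ isT) h.
  have := pw_lt ha fz0 h.
  by rewrite -mulrDl subrK mul1r.
have m0 : 0 < (1 - t) * f x + t * f y.
  have [lt|lt] : f x < f y \/ f y < f x.
    by case: ltgtP ne => // *; [left|right].
    have h1 : 0 < t * (f y - f x) by rewrite mulr_gt0 // subr_gt0.
    lra.
  have h1 : 0 < (1 - t) * (f x - f y) by rewrite mulr_gt0 // subr_gt0.
  lra.
set m := (1 - t) * f x + t * f y in m0 hz.
have mx : f x != m.
  apply/eqP => h; move/eqP: ne; apply.
  have : t * (f y - f x) = 0 by rewrite /m in h; lra.
  by move/eqP; rewrite mulf_eq0 (gt_eqF t0) /= subr_eq0 => /eqP ->.
have my : f y != m.
  apply/eqP => h; move/eqP: ne; apply.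
  have : (1 - t) * (f y - f x) = 0 by rewrite /m in h; lra.
  have t1' : 0 < 1 - t by rewrite subr_gt0.
  by move/eqP; rewrite mulf_eq0 (gt_eqF t1') /= subr_eq0 => /eqP ->.
have T1 := tangent ha m0 ax mx.
have T2 := tangent ha m0 ay my.
have hle := pw_le ha fz0 hz.
set K := alpha * m `^ alpha in T1 T2.
have e : (1 - t) * (K * (f x / m - 1)) + t * (K * (f y / m - 1)) = 0.
  rewrite mulrCA (mulrCA t) -mulrDr.
  have -> : (1 - t) * (f x / m - 1) + t * (f y / m - 1) = 0.
    by rewrite /m; field; rewrite gt_eqF.
  by rewrite mulr0.
have T1m : (1 - t) * (m `^ alpha + K * (f x / m - 1)) < (1 - t) * f x `^ alpha.
  by rewrite ltr_pM2l // subr_gt0.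
have T2m : t * (m `^ alpha + K * (f y / m - 1)) < t * f y `^ alpha.
  by rewrite ltr_pM2l.
lra.
Qed.

Lemma pow_Q (alpha : R) : 1 < alpha -> strictly_convex_fun C (fun x => f x `^ alpha) ->
  strictly_quasi_convex_fun C f.
Proof.
move=> ha SC x y t Cx Cy xy /andP[t0 t1].
have := SC x y t Cx Cy xy; rewrite t0 t1 => /(_ isT) /= h.
have Cz : C ((1 - t) *: x + t *: y) by apply: convC => //; rewrite !ltW.
have ax := hnn Cx; have ay := hnn Cy.
set M := Num.max (f x) (f y).
have M0 : 0 <= M by rewrite le_max ax.
have lx : f x <= M by rewrite le_max lexx.
have ly : f y <= M by rewrite le_max lexx orbT.
have hx := pw_le ha ax lx.
have hy := pw_le ha ay ly.
have T1m : (1 - t) * f x `^ alpha <= (1 - t) * M `^ alpha by rewrite ler_wpM2l // subr_ge0 ltW.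
have T2m : t * f y `^ alpha <= t * M `^ alpha by rewrite ler_wpM2l // ltW.
rewrite ltNge; apply/negP => hM.
have := pw_le ha M0 hM.
lra.
Qed.

Lemma sub_C r : sublevel C f r `<=` C.
Proof. by move=> x []. Qed.

Lemma rcS_C r x : rc (sublevel C f r) x -> x = 0 \/ C x.
Proof.
move=> h; have hC := rc_mono (@sub_C r) h.
have [->|x0] := eqVneq x 0; [by left|right].
by apply: (rc_cone hcone hsc hC); apply/eqP.
Qed.

Lemma rcS_le r x : {within C, continuous f} -> rc (sublevel C f r) x -> C x -> f x <= r.
Proof.
move=> cont [Ax Hx] Cx; rewrite leNgt; apply/negP => hr.
have e0 : 0 < f x - r by rewrite subr_gt0.
have [U [oU Ux HU]] := cont_get cont Cx e0.
have [y [Uy [_ [Cy fy]]]] := Hx U oU Ux.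
have := HU y Uy Cy; have := ler_norm (f x - f y); lra.
Qed.

Lemma C_affS r : 0 < r -> C `<=` Aff (sublevel C f r).
Proof.
move=> r0 w Cw.
case: (leP (f w) r) => h; first by apply: aff_self; split.
have fw0 : 0 < f w by lra.
set c := r / f w.
have c0 : 0 < c by rewrite divr_gt0.
have S1 : sublevel C f r (c *: w).
  split; first by apply: hcone.
  by rewrite hhom // /c mulfVK // gt_eqF.
have S2 : sublevel C f r ((c / 2) *: w).
  split; first by apply: hcone => //; rewrite divr_gt0.
  rewrite hhom ?divr_gt0 // /c.
  have -> : r / f w / 2 * f w = r / 2 by field; rewrite gt_eqF.
  lra.
have := @aff2 _ _ _ _ _ (2 / c - 1) (2 - 2 / c) S1 S2.
have -> : (2 / c - 1) *: (c *: w) + (2 - 2 / c) *: (c / 2 *: w) = w.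
  rewrite !scalerA comb_scal.
  have -> : (2 / c - 1) * c + (2 - 2 / c) * (c / 2) = 1.
    by field; rewrite gt_eqF.
  by rewrite scale1r.
by apply; lra.
Qed.

Lemma ri_S r z : {within C, continuous f} -> 0 < r -> ri C z -> C z -> f z < r ->
  ri (sublevel C f r) z.
Proof.
move=> cont r0 [_ [U1 [oU1 [U1z H1]]]] Cz fz.
have e0 : 0 < r - f z by rewrite subr_gt0.
have [U2 [oU2 U2z H2]] := cont_get cont Cz e0.
split; first exact: C_affS.
exists (U1 `&` U2); split; first exact: openI.
split=> // y [[U1y U2y] Ay].
have Cy : C y by apply: H1; split=> //; apply: aff_mono Ay; apply: sub_C.
split=> //.
have := H2 y U2y Cy; rewrite distrC; have := ler_norm (f y - f z); lra.
Qed.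

Lemma P23 : {within C, continuous f} -> strictly_quasi_convex_fun C f ->
  strictly_sub_convex C f.
Proof.
move=> cont Q r x y rx ry xy z hz.
have hx := rc_mono (@sub_C r) rx; have hy := rc_mono (@sub_C r) ry.
have riz := hsc hx hy xy hz.
have Cz := ri_sub riz.
move: hz => [[t [/andP[t0 t1] ze]] [zx zy]].
have tn0 : t != 0 by apply/eqP => h; apply: zx; rewrite ze h subr0 scale1r scale0r addr0.
have tn1 : t != 1 by apply/eqP => h; apply: zy; rewrite ze h subrr scale0r add0r scale1r.
have t0' : 0 < t by rewrite lt_neqAle eq_sym tn0.
have t1' : t < 1 by rewrite lt_neqAle tn1.
have fz : f z < r.
  case: (rcS_C rx) => [x0|Cx]; case: (rcS_C ry) => [y0|Cy].
  - by exfalso; apply: xy; rewrite x0 y0.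
  - have y0 : y <> 0 by move=> y0; apply: xy; rewrite x0 y0.
    have fy := rcS_le cont ry Cy; have py := Q_pos Q Cy y0.
    rewrite ze x0 scaler0 add0r hhom //.
    have t1'' : 0 < 1 - t by rewrite subr_gt0.
    have := mulr_gt0 t1'' py; lra.
  - have x0 : x <> 0 by move=> x0; apply: xy; rewrite x0 y0.
    have fx := rcS_le cont rx Cx; have px := Q_pos Q Cx x0.
    rewrite ze y0 scaler0 addr0 hhom ?subr_gt0 //.
    have := mulr_gt0 t0' px; lra.
  - have fx := rcS_le cont rx Cx; have fy := rcS_le cont ry Cy.
    have := Q x y t Cx Cy xy; rewrite t0' t1' -ze => /(_ isT) h.
    by apply: lt_le_trans h _; rewrite ge_max fx fy.
have r0 : 0 < r by have := hnn Cz; lra.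
exact: ri_S.
Qed.

Lemma P23z : strictly_quasi_convex_fun C f -> forall x, C x -> f x = 0 -> x = 0.
Proof.
move=> Q x Cx fx; apply: contrapT => x0.
by have := Q_pos Q Cx x0; rewrite fx ltxx.
Qed.

Lemma norm_lt (a b e : R) : a - b < e -> b - a < e -> `|a - b| < e.
Proof. by move=> h1 h2; rewrite ltr_norml; apply/andP; split; lra. Qed.

Lemma scal_neq2 (x : V) (a b : R) : x <> 0 -> a != b -> a *: x <> b *: x.
Proof.
move=> x0 ab h; apply: x0; have : (a - b) *: x = 0 by rewrite scalerBl h subrr.
by move/eqP; rewrite scaler_eq0 subr_eq0 (negbTE ab) /= => /eqP.
Qed.

Lemma aff_line y p (s : R) : C y -> C p -> Aff C (y - s *: p).
Proof.
move=> Cy Cp; have C2 : C (2 *: p) by apply: hcone => //; lra.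
have := @aff3 _ _ _ _ _ _ 1 s (- s) Cy Cp C2.
rewrite scale1r scalerA -(addrA y) comb_scal.
have -> : s + - s * 2 = - s by ring.
by rewrite scaleNr; apply; ring.
Qed.

Lemma aff_neg p : C p -> Aff C (- p).
Proof.
move=> Cp; have C2 : C (2 *: p) by apply: hcone => //; lra.
have := @aff2 _ _ _ _ _ 3 (-2) Cp C2.
rewrite scalerA comb_scal.
have -> : 3 + -2 * 2 = -1 :> R by ring.
by rewrite scaleN1r; apply; ring.
Qed.

Lemma ray (pt : forall q, C q -> q <> 0 -> ~ C (- q)) p y :
  C p -> p <> 0 -> C y -> y <> 0 -> exists2 l : R, 0 < l & y = l *: p.
Proof.
move=> Cp p0 Cy y0.
pose A := [set s : R | 0 <= s /\ C (y - s *: p)].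
have A0 : A 0 by split; rewrite ?scale0r ?subr0.
have hub : has_ubound A.
  apply: contrapT => /has_ubPn H.
  apply: (pt p Cp p0); apply: (rc_cone hcone hsc); last by move=> /eqP; rewrite oppr_eq0 => /eqP.
  split; first exact: aff_neg.
  move=> U oU Up.
  have Up0 : U (- p + 0 *: y) by rewrite scale0r addr0.
  have [e0 e00 He] := line_near oU Up0.
  have [s [s0 Cs] hs] := H (2 / e0).
  have sp : 0 < s by apply: lt_trans hs; rewrite divr_gt0.
  have hs' : 2 < s * e0 by rewrite -ltr_pdivrMr.
  exists (- p + s^-1 *: y); split.
    apply: He; rewrite subr0 ger0_norm ?invr_ge0 ?ltW //.
    by rewrite -[s^-1]div1r ltr_pdivrMr // mulrC; lra.
  have -> : - p + s^-1 *: y = s^-1 *: (y - s *: p).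
    by rewrite scalerBr scalerA mulVf ?gt_eqF // scale1r addrC.
  have Cw : C (s^-1 *: (y - s *: p)) by apply: hcone; rewrite ?invr_gt0.
  by split=> //; apply: aff_self.
have hs : has_sup A by split=> //; exists 0.
set ss := sup A.
have ub := sup_upper_bound hs.
have ss0 : 0 <= ss by apply: ub.
have rcz : rc C (y - ss *: p).
  split; first exact: aff_line.
  move=> U oU Uz.
  have Uz' : U (y + (- ss) *: p) by rewrite scaleNr.
  have [e1 e10 H1] := line_near oU Uz'.
  have [s As hs1] := sup_adherent e10 hs.
  have sle : s <= ss by apply: ub.
  have hs1' : ss - e1 < s := hs1.
  exists (y - s *: p); split.
    rewrite -scaleNr; apply: H1; apply: norm_lt; lra.
  by split; [apply: aff_line | case: As].
have [z0|z0] := eqVneq (y - ss *: p) 0.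
  have e := subr0_eq z0.
  exists ss => //; rewrite lt_neqAle ss0 andbT; apply/eqP => h.
  by apply: y0; rewrite e -h scale0r.
have z0' : y - ss *: p <> 0 by apply/eqP.
have Cz := rc_cone hcone hsc rcz z0'.
have [_ [U [oU [Uz HU]]]] := ri_C hcone hsc Cz z0'.
have Uz' : U (y + (- ss) *: p) by rewrite scaleNr.
have [e1 e10 H1] := line_near oU Uz'.
have : A (ss + e1 / 2).
  have h2 : 0 < e1 / 2 by rewrite divr_gt0.
  split; first lra.
  apply: HU; split; last exact: aff_line.
  rewrite -scaleNr; apply: H1; apply: norm_lt; lra.
move=> /ub; rewrite -/ss; lra.
Qed.

Lemma ri_lt r z : 0 < r -> ri (sublevel C f r) z -> f z < r.
Proof.
move=> r0 hz; have [Cz fz] := ri_sub hz.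
rewrite lt_neqAle fz andbT; apply/eqP => e.
move: hz => [_ [U [oU [Uz HU]]]].
have Uz' : U (0 + 1 *: z) by rewrite add0r scale1r.
have [d d0 Hd] := line_near oU Uz'.
have d2 : 0 < d / 2 by rewrite divr_gt0.
have : U (0 + (1 + d / 2) *: z) by apply: Hd; apply: norm_lt; lra.
rewrite add0r => Us.
have Cs : C ((1 + d / 2) *: z) by apply: hcone => //; lra.
have := HU _ (conj Us (C_affS r0 Cs)) => -[_].
rewrite hhom ?e //; last by lra.
have := mulr_gt0 d2 r0; rewrite mulrDl mul1r; lra.
Qed.

Section Three.
Hypothesis SS : strictly_sub_convex C f.
Hypothesis Z : forall x, C x -> f x = 0 -> x = 0.

Lemma pos3 x : C x -> x <> 0 -> 0 < f x.
Proof.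
move=> Cx x0; rewrite lt_neqAle hnn // andbT eq_sym; apply/eqP => h.
exact: x0 (Z Cx h).
Qed.

Lemma P32Q : strictly_quasi_convex_fun C f.
Proof.
move=> x y t Cx Cy xy t01.
set r := Num.max (f x) (f y).
have lx : f x <= r by rewrite le_max lexx.
have ly : f y <= r by rewrite le_max lexx orbT.
have r0 : 0 < r.
  rewrite ltNge; apply/negP => hr.
  have ex : f x = 0 by have := hnn Cx; lra.
  have ey : f y = 0 by have := hnn Cy; lra.
  by apply: xy; rewrite (Z Cx ex) (Z Cy ey).
have Sx : sublevel C f r x by [].
have Sy : sublevel C f r y by [].
apply: ri_lt => //.
exact: (SS (sub_rc Sx) (sub_rc Sy) xy (open_seg xy t01)).
Qed.

Lemma contx x (e : R) : C x -> x <> 0 -> 0 < e ->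
  exists U, [/\ open U, U x & forall y, U y -> C y -> `|f x - f y| < e].
Proof.
move=> Cx x0 e0.
have ax := pos3 Cx x0.
set a := f x in ax *.
set d := Num.min e a / 2.
have hm0 : 0 < Num.min e a by rewrite lt_min e0 ax.
have hm1 : Num.min e a <= e by rewrite ge_min lexx.
have hm2 : Num.min e a <= a by rewrite ge_min lexx orbT.
have d0 : 0 < d by rewrite /d divr_gt0.
set r1 := a - d.
have r10 : 0 < r1 by rewrite /r1 /d; lra.
have L : exists U1, [/\ open U1, U1 x & forall y, U1 y -> C y -> r1 < f y].
  apply: contrapT => H.
  have rcx : rc (sublevel C f r1) x.
    split; first exact: C_affS.
    move=> U oU Ux; apply: contrapT => H2; apply: H; exists U; split => // y Uy Cy.
    rewrite ltNge; apply/negP => fy; apply: H2; exists y; split => //.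
    by split; [exact: C_affS|].
  set c := r1 / a.
  have c0 : 0 < c by rewrite divr_gt0.
  have c1 : c < 1 by rewrite /c ltr_pdivrMr // mul1r /r1; lra.
  have Sy : sublevel C f r1 (c *: x).
    split; first exact: hcone.
    by rewrite hhom // /c mulfVK // gt_eqF.
  have ne : c *: x <> x.
    have := scal_neq2 x0 (_ : c != 1); rewrite scale1r; apply.
    by rewrite lt_eqF.
  have h12 : 0 < (2^-1 : R) < 1 by apply/andP; split; lra.
  have := SS (sub_rc Sy) rcx ne (open_seg ne h12).
  move=> /(ri_lt r10).
  rewrite scalerA comb_scal hhom //; last first.
    have hh : 0 < (1 - 2^-1) * c by apply: mulr_gt0 => //; lra.
    lra.
  have -> : ((1 - 2^-1) * c + 2^-1) * a = (r1 + a) / 2.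
    by rewrite /c; field; rewrite gt_eqF.
  rewrite /r1; lra.
have [U1 [oU1 U1x H1]] := L.
set r2 := a + e / 2.
set l := Num.min (r2 / a) (3/2).
have r2a : 1 < r2 / a by rewrite ltr_pdivlMr // mul1r /r2; have := e0; lra.
have l1 : 1 < l by rewrite lt_min r2a /=; lra.
have l2 : l <= 3/2 by rewrite ge_min lexx orbT.
have l3 : l <= r2 / a by rewrite ge_min lexx.
have S1 : sublevel C f r2 ((2 - l) *: x).
  split; first by apply: hcone => //; lra.
  rewrite hhom -/a //; last by lra.
  have : (2 - l) * a <= 1 * a by rewrite ler_pM2r //; lra.
  rewrite /r2; lra.
have S2 : sublevel C f r2 (l *: x).
  split; first by apply: hcone => //; lra.
  rewrite hhom -/a //; last by lra.
  have : l * a <= r2 / a * a by rewrite ler_pM2r.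
  by rewrite mulfVK // gt_eqF.
have ne : (2 - l) *: x <> l *: x by apply: scal_neq2 => //; apply/eqP; lra.
have h12 : 0 < (2^-1 : R) < 1 by apply/andP; split; lra.
have := SS (sub_rc S1) (sub_rc S2) ne (open_seg ne h12).
rewrite !scalerA comb_scal.
have -> : (1 - 2^-1) * (2 - l) + 2^-1 * l = 1 by field.
rewrite scale1r => -[_ [U2 [oU2 [U2x H2]]]].
exists (U1 `&` U2); split; first exact: openI.
  by split.
move=> y [U1y U2y] Cy.
have ly := H1 y U1y Cy.
have r20 : 0 < r2 by rewrite /r2; have := e0; lra.
have [_ uy] := H2 y (conj U2y (C_affS r20 Cy)).
apply: norm_lt; rewrite /r1 /r2 /d in ly uy; lra.
Qed.

Lemma cont0 (e : R) : C 0 -> 0 < e ->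
  exists U, [/\ open U, U 0 & forall y, U y -> C y -> f y < e].
Proof.
move=> C0 e0.
have fz := f0 C0.
have [triv|ntriv] := pselect (forall y, C y -> y = 0).
  exists setT; split; [exact: openT | by [] |].
  by move=> y _ Cy; rewrite (triv y Cy) fz.
have [p0 [Cp0 p00]] : exists p0, C p0 /\ p0 <> 0.
  apply: contrapT => H; apply: ntriv => y Cy; apply: contrapT => y0.
  by apply: H; exists y.
have [[q [Cq [q0 Cnq]]]|pt] := pselect (exists q, C q /\ q <> 0 /\ C (- q)).
  have fq := pos3 Cq q0.
  set M := Num.max (f q) (f (- q)).
  have lq : f q <= M by rewrite le_max lexx.
  have lnq : f (- q) <= M by rewrite le_max lexx orbT.
  have M0 : 0 < M by lra.
  set r := e / 2.
  have r0 : 0 < r by rewrite divr_gt0.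
  set c := r / M.
  have c0 : 0 < c by rewrite divr_gt0.
  have cM : c * M = r by rewrite /c mulfVK // gt_eqF.
  have S1 : sublevel C f r (c *: q).
    split; first exact: hcone.
    by rewrite hhom // -cM ler_pM2l.
  have S2 : sublevel C f r ((- c) *: q).
    rewrite scaleNr -scalerN; split; first exact: hcone.
    by rewrite hhom // -cM ler_pM2l.
  have ne : c *: q <> (- c) *: q by apply: scal_neq2 => //; apply/eqP; lra.
  have h12 : 0 < (2^-1 : R) < 1 by apply/andP; split; lra.
  have := SS (sub_rc S1) (sub_rc S2) ne (open_seg ne h12).
  rewrite !scalerA comb_scal.
  have -> : (1 - 2^-1) * c + 2^-1 * - c = 0 by field.
  rewrite scale0r => -[_ [U [oU [U0 HU]]]].
  exists U; split => // y Uy Cy.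
  have [_ fy] := HU y (conj Uy (C_affS r0 Cy)).
  rewrite /r in fy; lra.
have pt' : forall q, C q -> q <> 0 -> ~ C (- q).
  by move=> q Cq q0 Cnq; apply: pt; exists q.
have fp0 := pos3 Cp0 p00.
set p := (e / f p0) *: p0.
have k0 : 0 < e / f p0 by rewrite divr_gt0.
have Cp : C p by apply: hcone.
have fp : f p = e by rewrite /p hhom // mulfVK // gt_eqF.
have p0' : p <> 0.
  rewrite /p => /eqP; rewrite scaler_eq0 (gt_eqF k0) /= => /eqP; exact: p00.
have np0 : - p <> 0 by move=> /eqP; rewrite oppr_eq0 => /eqP.
have nrc : ~ rc C (- p) by move=> /(rc_cone hcone hsc)/(_ np0); exact: pt'.
have [U' [oU' U'p HU']] : exists U', [/\ open U', U' (- p) &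
    forall y, U' y -> Aff C y -> ~ C y].
  apply: contrapT => H; apply: nrc; split; first exact: aff_neg.
  move=> U oU Up; apply: contrapT => H2; apply: H; exists U; split => // y Uy Ay Cy.
  by apply: H2; exists y.
exists ((fun w => 1 *: w + - p) @^-1` U'); split.
- exact: aff_open.
- by rewrite /preimage /= scaler0 add0r.
move=> w; rewrite /preimage /= scale1r => Uw Cw.
have [->|w0] := eqVneq w 0; first by rewrite fz.
have [l l0 wl] := ray pt' Cp p0' Cw (elimN eqP w0).
rewrite wl hhom // fp.
have : l < 1.
  rewrite ltNge; apply/negP => l1.
  have [el|gl] := eqVneq l 1.
    apply: (HU' 0); last exact: C0.
      have h : w + - p = 0 by rewrite wl el scale1r subrr.
      by rewrite -h.
    exact: aff_self.
  have l1' : 0 < l - 1 by rewrite subr_gt0 lt_neqAle eq_sym gl l1.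
  have e' : w - p = (l - 1) *: p by rewrite wl scalerBl scale1r.
  have Cl : C ((l - 1) *: p) by apply: hcone.
  apply: (HU' ((l - 1) *: p)); last exact: Cl.
    by rewrite -e'.
  exact: aff_self.
move=> l1; have h : 0 < 1 - l by rewrite subr_gt0.
have := mulr_gt0 h e0; lra.
Qed.

Lemma P32C : {within C, continuous f}.
Proof.
apply: cont_build => x Cx e e0.
have [x0|x0] := eqVneq x 0.
  have C0 : C 0 by rewrite -x0.
  have [U [oU U0 HU]] := cont0 C0 e0.
  exists U; rewrite x0; split => // y Uy Cy.
  rewrite (f0 C0) sub0r normrN ger0_norm ?hnn //; exact: HU.
by apply: contx => //; apply/eqP.
Qed.

End Three.

End Main.

Theorem mainTheorem4 (R : realType) (V : topologicalLmodType R)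
  (C : set V) (f : V -> R)
  (hne : C !=set0) (hcone : is_cone C) (hsc : strictly_convex_set C)
  (hnn : forall x, C x -> 0 <= f x)
  (hhom : forall (l : R) x, 0 < l -> C x -> f (l *: x) = l * f x)
  (alpha : R) (halpha : 1 < alpha) :
  (({within C, continuous f} /\
      strictly_convex_fun C (fun x => f x `^ alpha))
   <-> ({within C, continuous f} /\ strictly_quasi_convex_fun C f))
  /\
  (({within C, continuous f} /\ strictly_quasi_convex_fun C f)
   <-> (strictly_sub_convex C f /\ (forall x, C x -> f x = 0 -> x = 0))).
Proof.
split.
  split.
    by move=> [cont SC]; split => //; exact: (pow_Q hsc hnn halpha SC).
  by move=> [cont Q]; split => //; exact: (Q_spow hcone hsc hnn hhom halpha Q).
split.
  move=> [cont Q]; split; first exact: (P23 hcone hsc hnn hhom cont Q).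
  exact: (P23z hcone hnn hhom Q).
move=> [SS Z]; split; last exact: (P32Q hcone hnn hhom SS Z).
exact: (P32C hcone hsc hnn hhom SS Z).
Qed.
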